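(* Let $\Sigma$ be a finite alphabet with $|\Sigma|\ge2$ and let $\delta$ be any Hamming compatible metric on $\Sigma^*$ (no uniformity assumed). Let $u,w\in\Sigma^*$ with $l(u)\ge l(w)$, and let $v$ be a Hamming opposite of $u$ satisfying $H(\underline{u},\underline{w})+H(\underline{v},\underline{w})=l(w)$. Then $\delta(u,w)\ge d_2(u,w)$ or $\delta(v,w)\ge d_2(v,w)$. Consequently, for every $w\in\Sigma^*$ there is a sequence of words $u_n\in\Sigma_n$ ($n\ge l(w)$) with $\delta(u_n,w)\ge d_2(u_n,w)$; in particular $\delta(u_n,w)\to\infty$ as $n\to\infty$.
   Context: $\Sigma_n$ is the set of words of length $n$ over $\Sigma$, $\Sigma^*$ the set of all finite words, $l(u)$ the length of $u$, $H$ the Hamming distance between equal-length words. For arbitrary $x,y$, if $l(x)\ge l(y)$, $\underline{x}$ is the prefix of $x$ of length $l(y)$ and $\underline{y}=y$ (symmetrically otherwise). Metrics are integer-valued; a metric $\delta$ on $\Sigma^*$ is Hamming compatible if $\delta(x,y)=H(x,y)$ whenever $l(x)=l(y)$. $d_2(x,y)=H(\underline{x},\underline{y})+\lceil |l(x)-l(y)|/2\rceil$. Two words of the same length $n$ are Hamming opposites if their Hamming distance is $n$. *)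

(* Defs.v *)
From mathcomp Require Import all_boot.
Set Implicit Arguments. Unset Strict Implicit. Unset Printing Implicit Defensive.

Section Words.
Variable T : finType.

(* Hamming distance: number of positions where the words differ
   (used only on equal-length words, or on the truncations below). *)
Definition hamming (x y : seq T) : nat :=
  count (fun p => p.1 != p.2) (zip x y).

(* underline x (w.r.t. y): prefix of x of length min (l x) (l y). *)
Definition ul (x y : seq T) : seq T := take (minn (size x) (size y)) x.

Definition is_metric (d : seq T -> seq T -> nat) : Prop :=
  (forall x y, d x y = 0 <-> x = y) /\
  (forall x y, d x y = d y x) /\
  (forall x y z, d x z <= d x y + d y z).

Definition hamming_compatible (d : seq T -> seq T -> nat) : Prop :=
  forall x y, size x = size y -> d x y = hamming x y.

Definition ndist (a b : nat) : nat := (a - b) + (b - a).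

Definition d2 (x y : seq T) : nat :=
  hamming (ul x y) (ul y x) + uphalf (ndist (size x) (size y)).

End Words.

(* Main.v *)
Require Import Defs.
From mathcomp Require Import all_boot.
From mathcomp Require Import zify.

Lemma ham_refl (T : finType) (s : seq T) : hamming s s = 0.
Proof. by elim: s => //= x s IH; rewrite /hamming /= eqxx /=; exact: IH. Qed.

Lemma ham_flip (T : finType) (f : T -> T) (s : seq T) :
  (forall x, f x != x) -> hamming (map f s) s = size s.
Proof.
move=> Hf; elim: s => //= x s IH; rewrite /hamming /= Hf /=.
by rewrite -/(hamming _ _) IH.
Qed.

Lemma ham_flip' (T : finType) (f : T -> T) (s : seq T) :
  (forall x, f x != x) -> hamming s (map f s) = size s.
Proof.
move=> Hf; elim: s => //= x s IH; rewrite /hamming /= eq_sym Hf /=.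
by rewrite -/(hamming _ _) IH.
Qed.

Lemma ul_small (T : finType) (x y : seq T) : size y <= size x -> ul y x = y.
Proof. by move=> H; rewrite /ul (minn_idPl H) take_size. Qed.

Lemma ul_big (T : finType) (x y : seq T) : size y <= size x -> ul x y = take (size y) x.
Proof. by move=> H; rewrite /ul (minn_idPr H). Qed.

Theorem mainTheorem9 (T : finType) (delta : seq T -> seq T -> nat) :
  1 < #|T| ->
  is_metric delta -> hamming_compatible delta ->
  (forall u w v : seq T,
     size w <= size u ->
     size v = size u -> hamming u v = size u ->
     hamming (ul u w) (ul w u) + hamming (ul v w) (ul w v) = size w ->
     d2 u w <= delta u w \/ d2 v w <= delta v w) /\
  (forall w : seq T, exists un : nat -> seq T,
     (forall n, size w <= n -> size (un n) = n /\ d2 (un n) w <= delta (un n) w) /\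
     (forall M, exists N, forall n, N <= n -> M <= delta (un n) w)).
Proof.
move=> HT [H0 [Hsym Htri]] Hc.
have P1 : forall u w v : seq T,
     size w <= size u ->
     size v = size u -> hamming u v = size u ->
     hamming (ul u w) (ul w u) + hamming (ul v w) (ul w v) = size w ->
     d2 u w <= delta u w \/ d2 v w <= delta v w.
  move=> u w v Hwu Hvu Huv Hsum.
  case: (leqP (d2 u w) (delta u w)) => [|h1]; first by left.
  case: (leqP (d2 v w) (delta v w)) => [|h2]; first by right.
  exfalso.
  have Hd : delta u v = size u by rewrite Hc ?Hvu.
  have := Htri u w v; rewrite Hd (Hsym w v) => Ht.
  move: h1 h2; rewrite /d2 Hvu.
  set k := uphalf _.
  have Hk : k.*2 <= ndist (size u) (size w) + 1.
    by rewrite /k uphalfK; case: odd => /=; lia.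
  move: Hk Hsum; rewrite /ndist; lia.
split=> //.
move=> w.
have [a [b [_ _ hab]]] : exists x y : T, [/\ x \in T, y \in T & x != y] by apply/card_gt1P.
pose f := fun x : T => if x == a then b else a.
have Hf : forall x, f x != x.
  by move=> x; rewrite /f; case: (eqVneq x a) => [->|//]; rewrite eq_sym.
pose u := fun n => w ++ nseq (n - size w) a.
pose v := fun n => map f (u n).
pose un := fun n => if d2 (u n) w <= delta (u n) w then u n else v n.
have Hun : forall n, size w <= n -> size (un n) = n /\ d2 (un n) w <= delta (un n) w.
  move=> n Hn.
  have Hsu : size (u n) = n by rewrite size_cat size_nseq; lia.
  have Hwu : size w <= size (u n) by rewrite Hsu.
  have Htk : take (size w) (u n) = w by rewrite /u take_size_cat.
  have := P1 (u n) w (v n) Hwu.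
  rewrite /v size_map ham_flip' // => /(_ erefl erefl).
  rewrite (@ul_small _ (u n) w Hwu) (@ul_small _ (map f (u n)) w) ?size_map //.
  rewrite (@ul_big _ (u n) w Hwu) (@ul_big _ (map f (u n)) w) ?size_map //.
  rewrite -map_take Htk ham_refl ham_flip //.
  move=> /(_ erefl) Hor.
  rewrite /un; case: ifP => Hc1; first by split.
  split; first by rewrite size_map.
  by case: Hor => //; rewrite Hc1.
exists un; split; first exact: Hun.
move=> M.
exists (size w + M.*2) => n Hn.
have [_ Hd] := Hun n (leq_trans (leq_addr _ _) Hn).
apply: leq_trans Hd; rewrite /d2.
have [Hs _] := Hun n (leq_trans (leq_addr _ _) Hn).
apply: leq_trans (leq_addl _ _).
rewrite geq_uphalf_double Hs /ndist; lia.
Qed.
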